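(* Let $\ell\in\mathbb{N}$, $s=2\ell-1$, and let $n_1,n_2,N_1,N_2\in\mathbb{N}$ satisfy $$\frac{n_1}{N_1}=\frac{n_2}{N_2}=s .$$ Let $m_1,m_2\in\mathbb{N}$ be arbitrary integers with $m_1<n_1$ and $m_2<n_2$, and put $\mathbf n=(n_1,n_2)$, $\mathbf m=(m_1,m_2)$. Let $\mathbf f=(f_1,f_2,f_3)$ and $\tilde{\mathbf f}=(\tilde f_1,\tilde f_2,\tilde f_3)$ be functions from $[-1,1]^2$ to $\mathbb{R}^3$. Define the color images (triples of matrices) $$I(i,j)=\mathbf f(x_i^{n_1},y_j^{n_2}),\quad \tilde I(i,j)=\tilde{\mathbf f}(x_i^{n_1},y_j^{n_2}),\qquad i=1,\dots,n_1,\ j=1,\dots,n_2,$$ $$R(i,j)=\mathbf f(x_i^{N_1},y_j^{N_2}),\qquad i=1,\dots,N_1,\ j=1,\dots,N_2,$$ and the output image $\tilde R=[\tilde R_1,\tilde R_2,\tilde R_3]$ by $$\tilde R_\lambda(i,j)=V_{\mathbf n}^{\mathbf m}\tilde f_\lambda(x_i^{N_1},y_j^{N_2}),\qquad i=1,\dots,N_1,\ j=1,\dots,N_2,\ \lambda=1,2,3 .$$ Then $$\mathrm{MSE}(R,\tilde R)\le s^2\,\mathrm{MSE}(I,\tilde I),$$ and the same estimate holds for the luma channels: $\mathrm{MSE}(R_Y,\tilde R_Y)\le s^2\,\mathrm{MSE}(I_Y,\tilde I_Y)$. If moreover $I=\tilde I$, then $\mathrm{PSNR}(R,\tilde R)=\infty$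 and $\mathrm{SSIM}(R,\tilde R)=1$.
   Context: Chebyshev nodes: for $n\in\mathbb N$ and $k=1,\dots,n$, $t_k^n=\frac{(2k-1)\pi}{2n}$, and $x_k^n=y_k^n=\cos(t_k^n)$ (zeros of the first-kind Chebyshev polynomial of degree $n$). Throughout, $\xi\in[-1,1]$ and $t\in[0,\pi]$ are related by $\xi=\cos t$. Orthogonal VP polynomials: for $n,m\in\mathbb N$ with $m\le n$ and $r=0,\dots,n-1$, $q^n_{m,r}(\xi)=\cos(rt)$ if $0\le r\le n-m$, and $q^n_{m,r}(\xi)=\frac{n+m-r}{2m}\cos(rt)+\frac{n-m-r}{2m}\cos((2n-r)t)$ if $n-m<r<n$. Fundamental VP polynomials: $\Phi^{n}_{m,k}(\xi)=\frac2n\Big[\frac12+\sum_{r=1}^{n-1}\cos(r t_k^n)\,q^n_{m,r}(\xi)\Big]$, $k=1,\dots,n$. VP polynomial of $g:[-1,1]^2\to\mathbb R$: $V_{\mathbf n}^{\mathbf m}g(x,y)=\sum_{i=1}^{n_1}\sum_{j=1}^{n_2}g(x_i^{n_1},y_j^{n_2})\,\Phi^{n_1}_{m_1,i}(x)\,\Phi^{n_2}_{m_2,j}(y)$. Metrics: for real $\nu\times\mu$ matrices, $\mathrm{MSE}(A,B)=\frac1{\nu\mu}\|A-B\|_F^2$ (Frobenius norm). For color images $A=[A_1,A_2,A_3]$, $B=[B_1,B_2,B_3]$, $\mathrm{MSE}(A,B)=\frac13\sum_{\lambda=1}^3\mathrm{MSE}(A_\lambda,B_\lambda)$. The luma channel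 is $A_Y=\sum_{\lambda=1}^3\alpha_\lambda A_\lambda+\alpha_4$ (entrywise, with fixed real coefficients $\alpha_1,\dots,\alpha_4$, those of the ITU-R BT.601 standard). $\mathrm{PSNR}(A,B)=20\log_{10}\big(\max_f/\sqrt{\mathrm{MSE}(A_Y,B_Y)}\big)$, where $\max_f>0$ is the maximal pixel value, with the convention that it equals $\infty$ when $\mathrm{MSE}(A_Y,B_Y)=0$. $\mathrm{SSIM}(A,B)=\frac{(2\mu_A\mu_B+c_1)(2\,\mathrm{cov}+c_2)}{(\mu_A^2+\mu_B^2+c_1)(\sigma_A^2+\sigma_B^2+c_2)}$, where $\mu_A,\mu_B$ and $\sigma_A^2,\sigma_B^2$ are the averages and variances of the entries of $A_Y,B_Y$, $\mathrm{cov}$ their covariance, and $c_1,c_2>0$ fixed constants. *)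

(* Defs.v *)
From Stdlib Require Import Reals Lra Lia Arith.
From Coquelicot Require Import Rbar.
Open Scope R_scope.

Fixpoint sum_1n (n : nat) (f : nat -> R) : R :=
  match n with
  | O => 0
  | S p => sum_1n p f + f (S p)
  end.

Definition cheb_t (n k : nat) : R := (2 * INR k - 1) * PI / (2 * INR n).
Definition cheb_node (n k : nat) : R := cos (cheb_t n k).

Definition q_VP (n m r : nat) (xi : R) : R :=
  let t := acos xi in
  if (r <=? n - m)%nat then cos (INR r * t)
  else (INR n + INR m - INR r) / (2 * INR m) * cos (INR r * t)
     + (INR n - INR m - INR r) / (2 * INR m) * cos ((2 * INR n - INR r) * t).

Definition Phi_VP (n m k : nat) (xi : R) : R :=
  2 / INR n * (1 / 2 + sum_1n (n - 1) (fun r => cos (INR r * cheb_t n k) * q_VP n m r xi)).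

Definition VP2 (n1 n2 m1 m2 : nat) (g : R -> R -> R) (x y : R) : R :=
  sum_1n n1 (fun i => sum_1n n2 (fun j =>
    g (cheb_node n1 i) (cheb_node n2 j) * Phi_VP n1 m1 i x * Phi_VP n2 m2 j y)).

(* A (grayscale) image of size nu x mu is a function (i,j) |-> A i j, i = 1..nu, j = 1..mu.
   A color image is a function (lambda,i,j) |-> A lambda i j, channel lambda = 1,2,3. *)
Definition gimage := nat -> nat -> R.
Definition cimage := nat -> nat -> nat -> R.

Definition MSE (nu mu : nat) (A B : gimage) : R :=
  / (INR nu * INR mu) * sum_1n nu (fun i => sum_1n mu (fun j => (A i j - B i j) ^ 2)).

Definition MSE_color (nu mu : nat) (A B : cimage) : R :=
  / 3 * sum_1n 3 (fun l => MSE nu mu (A l) (B l)).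

Definition luma (a1 a2 a3 a4 : R) (A : cimage) : gimage :=
  fun i j => a1 * A 1%nat i j + a2 * A 2%nat i j + a3 * A 3%nat i j + a4.

Definition log10 (x : R) : R := ln x / ln 10.

Definition PSNR (a1 a2 a3 a4 maxf : R) (nu mu : nat) (A B : cimage) : Rbar :=
  let e := MSE nu mu (luma a1 a2 a3 a4 A) (luma a1 a2 a3 a4 B) in
  if Req_EM_T e 0 then p_infty else Finite (20 * log10 (maxf / sqrt e)).

Definition gmean (nu mu : nat) (A : gimage) : R :=
  / (INR nu * INR mu) * sum_1n nu (fun i => sum_1n mu (fun j => A i j)).
Definition gcov (nu mu : nat) (A B : gimage) : R :=
  / (INR nu * INR mu) * sum_1n nu (fun i => sum_1n mu (fun j =>
      (A i j - gmean nu mu A) * (B i j - gmean nu mu B))).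
Definition gvar (nu mu : nat) (A : gimage) : R := gcov nu mu A A.

Definition SSIM (a1 a2 a3 a4 c1 c2 : R) (nu mu : nat) (A B : cimage) : R :=
  let AY := luma a1 a2 a3 a4 A in
  let BY := luma a1 a2 a3 a4 B in
  let muA := gmean nu mu AY in
  let muB := gmean nu mu BY in
  (2 * muA * muB + c1) * (2 * gcov nu mu AY BY + c2)
  / ((muA ^ 2 + muB ^ 2 + c1) * (gvar nu mu AY + gvar nu mu BY + c2)).

Definition sample_image (n1 n2 : nat) (f : nat -> R -> R -> R) : cimage :=
  fun l i j => f l (cheb_node n1 i) (cheb_node n2 j).

Definition VP_image (n1 n2 m1 m2 N1 N2 : nat) (ft : nat -> R -> R -> R) : cimage :=
  fun l i j => VP2 n1 n2 m1 m2 (ft l) (cheb_node N1 i) (cheb_node N2 j).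

(* Main.v *)
Require Import Defs.
From Stdlib Require Import Reals Lra Lia Arith.
From Coquelicot Require Import Rbar.
Open Scope R_scope.

Lemma sum_1n_ext n f g : (forall i, (1 <= i <= n)%nat -> f i = g i) -> sum_1n n f = sum_1n n g.
Proof.
  induction n; simpl; intros H; auto.
  rewrite IHn; [rewrite H; auto; lia|]. intros; apply H; lia.
Qed.

Lemma sum_1n_plus n f g : sum_1n n (fun i => f i + g i) = sum_1n n f + sum_1n n g.
Proof. induction n; simpl; [lra|rewrite IHn; lra]. Qed.

Lemma sum_1n_scal n c f : sum_1n n (fun i => c * f i) = c * sum_1n n f.
Proof. induction n; simpl; [lra|rewrite IHn; lra]. Qed.

Lemma sum_1n_const n c : sum_1n n (fun _ => c) = INR n * c.
Proof. induction n; simpl sum_1n; [simpl; lra|rewrite IHn, S_INR; lra]. Qed.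

Lemma cos_npi j : cos (INR j * PI) = (-1) ^ j.
Proof.
  induction j; simpl pow. rewrite Rmult_0_l, cos_0; auto.
  rewrite S_INR, Rmult_plus_distr_r, Rmult_1_l, cos_plus, cos_PI, sin_PI, IHj. lra.
Qed.

Lemma sin_npi j : sin (INR j * PI) = 0.
Proof.
  induction j. rewrite Rmult_0_l, sin_0; auto.
  rewrite S_INR, Rmult_plus_distr_r, Rmult_1_l, sin_plus, cos_PI, sin_PI, IHj. lra.
Qed.

Lemma tele p th : 2 * sin (th/2) * (1/2 + sum_1n p (fun r => cos (INR r * th)))
   = sin ((INR p + 1/2) * th).
Proof.
  induction p.
  - simpl. replace ((0 + 1/2) * th) with (th/2) by lra. lra.
  - cbn [sum_1n]. rewrite S_INR.
    replace (2 * sin (th / 2) * (1 / 2 + (sum_1n p (fun r : nat => cos (INR r * th)) + cos ((INR p + 1) * th))))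
      with (2 * sin (th / 2) * (1 / 2 + sum_1n p (fun r : nat => cos (INR r * th))) + 2 * cos ((INR p + 1) * th) * sin (th/2)) by ring.
    rewrite IHp.
    replace ((INR p + 1 + 1/2) * th) with ((INR p + 1) * th + th/2) by field.
    replace ((INR p + 1/2) * th) with ((INR p + 1) * th - th/2) by field.
    rewrite sin_plus, sin_minus. ring.
Qed.

Lemma kernel n j : (0 < j < 2 * n)%nat ->
  1/2 + sum_1n (n - 1) (fun r => cos (INR r * (INR j * PI / INR n))) = - (-1)^j / 2.
Proof.
  intros Hj.
  assert (Hn : 0 < INR n) by (apply lt_0_INR; lia).
  set (th := INR j * PI / INR n).
  assert (Hs : sin (th/2) > 0).
  { apply sin_gt_0; unfold th.
    - apply Rmult_lt_0_compat; [|lra]. apply Rmult_lt_0_compat; [|apply Rinv_0_lt_compat; lra].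
      apply Rmult_lt_0_compat; [apply lt_0_INR; lia|apply PI_RGT_0].
    - assert (INR j < 2 * INR n). { replace 2 with (INR 2) by (simpl; lra). rewrite <- mult_INR. apply lt_INR; lia. }
      pose proof PI_RGT_0.
      apply Rmult_lt_reg_r with (2 * INR n); [lra|].
      field_simplify; try lra. nra. }
  pose proof (tele (n-1) th) as T.
  rewrite minus_INR in T by lia. rewrite INR_1 in T.
  replace ((INR n - 1 + 1/2) * th) with (INR j * PI - th/2) in T
    by (unfold th; field; lra).
  rewrite sin_minus, sin_npi, cos_npi in T.
  apply Rmult_eq_reg_l with (2 * sin (th/2)); [|lra].
  rewrite T. field.
Qed.

Lemma cheb_t_bounds n k : (1 <= k <= n)%nat -> 0 < cheb_t n k < PI.
Proof.
  intros H. unfold cheb_t. pose proof PI_RGT_0.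
  assert (1 <= INR k) by (replace 1 with (INR 1) by reflexivity; apply le_INR; lia).
  assert (INR k <= INR n) by (apply le_INR; lia).
  split.
  - apply Rmult_lt_0_compat; [nra|]. apply Rinv_0_lt_compat; lra.
  - apply Rmult_lt_reg_r with (2 * INR n); [lra|].
    field_simplify; try lra. nra.
Qed.

Lemma q_node n m r h : (1 <= m)%nat -> (1 <= h <= n)%nat ->
  q_VP n m r (cheb_node n h) = cos (INR r * cheb_t n h).
Proof.
  intros Hm Hh. pose proof (cheb_t_bounds n h Hh) as B.
  unfold q_VP, cheb_node. rewrite acos_cos by lra.
  destruct (r <=? n - m)%nat; auto.
  assert (E : cos ((2 * INR n - INR r) * cheb_t n h) = - cos (INR r * cheb_t n h)).
  { replace ((2 * INR n - INR r) * cheb_t n h)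
      with ((PI - INR r * cheb_t n h) + 2 * INR (h - 1) * PI).
    - rewrite cos_period, Rtrigo_facts.cos_pi_minus. auto.
    - unfold cheb_t. rewrite minus_INR by lia. rewrite INR_1. field.
      assert (0 < INR n) by (apply lt_0_INR; lia). lra. }
  rewrite E. assert (0 < INR m) by (apply lt_0_INR; lia). field. lra.
Qed.

Lemma prodsum x y : cos x * cos y = (cos (x - y) + cos (x + y)) / 2.
Proof. rewrite cos_minus, cos_plus. field. Qed.

Lemma Phi_sum n k h :
  (1 <= k <= n)%nat -> (1 <= h <= n)%nat -> (h <= k)%nat ->
  1/2 + sum_1n (n - 1) (fun r => cos (INR r * cheb_t n k) * cos (INR r * cheb_t n h))
  = if (k =? h)%nat then INR n / 2 else 0.
Proof.
  intros Hk Hh Hkh.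
  assert (Hn : 0 < INR n) by (apply lt_0_INR; lia).
  rewrite (sum_1n_ext _ _ (fun r => / 2 * cos (INR r * (cheb_t n k - cheb_t n h))
                               + / 2 * cos (INR r * (cheb_t n k + cheb_t n h)))).
  2:{ intros r _. rewrite prodsum, Rmult_minus_distr_l, Rmult_plus_distr_l. field. }
  rewrite sum_1n_plus, !sum_1n_scal.
  assert (Ee : cheb_t n k + cheb_t n h = INR (k + h - 1) * PI / INR n).
  { unfold cheb_t. rewrite minus_INR by lia. rewrite plus_INR, INR_1. field. lra. }
  assert (Ed : cheb_t n k - cheb_t n h = INR (k - h) * PI / INR n).
  { unfold cheb_t. rewrite minus_INR by lia. field. lra. }
  rewrite Ee, Ed.
  pose proof (kernel n (k + h - 1)) as K2.
  destruct (Nat.eqb_spec k h) as [->|Hne].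
  - rewrite Nat.sub_diag.
    rewrite (sum_1n_ext _ _ (fun _ => 1)).
    2:{ intros. simpl INR. rewrite Rmult_0_l, Rdiv_0_l, Rmult_0_r, cos_0. auto. }
    rewrite sum_1n_const.
    assert (h + h - 1 = S (2 * (h - 1)))%nat as E1 by lia.
    assert (S1 : 1/2 + sum_1n (n - 1) (fun r => cos (INR r * (INR (h + h - 1) * PI / INR n))) = 1/2).
    { rewrite K2 by lia. rewrite E1, pow_1_odd. field. }
    rewrite minus_INR, INR_1 by lia. lra.
  - pose proof (kernel n (k - h)) as K1.
    assert (k + h - 1 = (k - h) + S (2 * (h - 1)))%nat as E1 by lia.
    assert (S1 : 1/2 + sum_1n (n - 1) (fun r => cos (INR r * (INR (k + h - 1) * PI / INR n))) = (-1)^(k-h)/2).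
    { rewrite K2 by lia. rewrite E1, pow_add, pow_1_odd. field. }
    assert (S0 : 1/2 + sum_1n (n - 1) (fun r => cos (INR r * (INR (k - h) * PI / INR n))) = - (-1)^(k-h)/2).
    { apply K1. lia. }
    lra.
Qed.

Lemma Phi_node n m k h : (1 <= m)%nat ->
  (1 <= k <= n)%nat -> (1 <= h <= n)%nat ->
  Phi_VP n m k (cheb_node n h) = if (k =? h)%nat then 1 else 0.
Proof.
  intros Hm Hk Hh.
  assert (Hn : 0 < INR n) by (apply lt_0_INR; lia).
  unfold Phi_VP.
  rewrite (sum_1n_ext _ _ (fun r => cos (INR r * cheb_t n k) * cos (INR r * cheb_t n h))).
  2:{ intros. rewrite q_node by lia. auto. }
  destruct (le_lt_dec h k).
  - rewrite Phi_sum by lia. destruct (k =? h)%nat; field; lra.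
  - rewrite (sum_1n_ext _ _ (fun r => cos (INR r * cheb_t n h) * cos (INR r * cheb_t n k))).
    2:{ intros. apply Rmult_comm. }
    rewrite Phi_sum by lia.
    rewrite Nat.eqb_sym. destruct (k =? h)%nat; field; lra.
Qed.

Lemma sum_delta n a F : (1 <= a <= n)%nat ->
  sum_1n n (fun i => F i * (if (i =? a)%nat then 1 else 0)) = F a.
Proof.
  induction n; intros H; [lia|]. cbn [sum_1n].
  destruct (Nat.eq_dec a (S n)) as [->|Hne].
  - rewrite Nat.eqb_refl.
    rewrite (sum_1n_ext _ _ (fun _ => 0)).
    + rewrite sum_1n_const. ring.
    + intros i Hi. replace (i =? S n)%nat with false by (symmetry; apply Nat.eqb_neq; lia). ring.
  - rewrite IHn by lia. replace (S n =? a)%nat with false by (symmetry; apply Nat.eqb_neq; lia). ring.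
Qed.

Lemma VP2_node n1 n2 m1 m2 g a b : (1 <= m1)%nat -> (1 <= m2)%nat ->
  (1 <= a <= n1)%nat -> (1 <= b <= n2)%nat ->
  VP2 n1 n2 m1 m2 g (cheb_node n1 a) (cheb_node n2 b) = g (cheb_node n1 a) (cheb_node n2 b).
Proof.
  intros. unfold VP2.
  rewrite (sum_1n_ext _ _ (fun i => g (cheb_node n1 i) (cheb_node n2 b) * (if (i =? a)%nat then 1 else 0))).
  - apply sum_delta; auto.
  - intros i Hi.
    rewrite (sum_1n_ext _ _ (fun j => (g (cheb_node n1 i) (cheb_node n2 j) * Phi_VP n1 m1 i (cheb_node n1 a)) * (if (j =? b)%nat then 1 else 0))).
    + rewrite sum_delta by auto. rewrite Phi_node by auto. auto.
    + intros j Hj. rewrite (Phi_node n2 m2 j b) by auto. auto.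
Qed.

Definition phi (l i : nat) : nat := ((2*l-1)*i + 1 - l)%nat.

Lemma phi_strict l i : (1 <= l)%nat -> (phi l i < phi l (S i))%nat.
Proof. intros. unfold phi. destruct i; nia. Qed.

Lemma phi_range l N i : (1 <= l)%nat -> (1 <= i <= N)%nat -> (1 <= phi l i <= (2*l-1)*N)%nat.
Proof. intros. unfold phi. nia. Qed.

Lemma INR_odd x : (1 <= x)%nat -> INR (2 * x - 1) = 2 * INR x - 1.
Proof. intros. rewrite minus_INR, mult_INR by lia. rewrite INR_1. simpl INR. ring. Qed.

Lemma node_phi l N i : (1 <= l)%nat -> (1 <= N)%nat -> (1 <= i)%nat ->
  cheb_node N i = cheb_node ((2*l-1)*N) (phi l i).
Proof.
  intros Hl HN Hi. unfold cheb_node, cheb_t. f_equal.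
  assert (E : (2 * phi l i - 1 = (2*l-1) * (2*i-1))%nat) by (unfold phi; nia).
  assert (E2 : 2 * INR (phi l i) - 1 = INR (2*l-1) * (2 * INR i - 1)).
  { replace (2 * INR (phi l i) - 1) with (INR (2 * phi l i - 1)).
    - rewrite E, mult_INR, !INR_odd by (unfold phi; nia). auto.
    - rewrite INR_odd by (unfold phi; nia). auto. }
  rewrite E2, mult_INR.
  assert (0 < INR (2*l-1)) by (apply lt_0_INR; lia).
  assert (0 < INR N) by (apply lt_0_INR; lia).
  field. lra.
Qed.

Lemma sum_nonneg n g : (forall k, 0 <= g k) -> 0 <= sum_1n n g.
Proof. intros H; induction n; simpl; [lra|]. specialize (H (S n)). lra. Qed.

Lemma sum_le_len p n g : (forall k, 0 <= g k) -> (p <= n)%nat -> sum_1n p g <= sum_1n n g.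
Proof.
  intros H Hp. induction Hp; [lra|]. simpl. specialize (H (S m)). lra.
Qed.

Lemma sum_le n f g : (forall i, (1 <= i <= n)%nat -> f i <= g i) -> sum_1n n f <= sum_1n n g.
Proof.
  induction n; simpl; intros H; [lra|].
  assert (sum_1n n f <= sum_1n n g) by (apply IHn; intros; apply H; lia).
  specialize (H (S n)). assert (f (S n) <= g (S n)) by (apply H; lia). lra.
Qed.

Lemma subsum N n g (ph : nat -> nat) : (forall k, 0 <= g k) ->
  (forall i, (ph i < ph (S i))%nat) -> (ph N <= n)%nat ->
  sum_1n N (fun i => g (ph i)) <= sum_1n n g.
Proof.
  intros Hg Hph. revert n. induction N; intros n Hn.
  - simpl. apply sum_nonneg; auto.
  - cbn [sum_1n].
    assert (IH := IHN (ph (S N) - 1)%nat ltac:(specialize (Hph N); lia)).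
    apply Rle_trans with (sum_1n (ph (S N)) g).
    + specialize (Hph N). destruct (ph (S N)) as [|q] eqn:Eq; [lia|].
      cbn [sum_1n]. replace (S q - 1)%nat with q in IH by lia. lra.
    + apply sum_le_len; auto.
Qed.

Lemma mse_sub l N1 N2 (A B C D : gimage) : (1 <= l)%nat -> (1 <= N1)%nat -> (1 <= N2)%nat ->
  (forall i j, (1 <= i <= N1)%nat -> (1 <= j <= N2)%nat ->
     A i j - B i j = C (phi l i) (phi l j) - D (phi l i) (phi l j)) ->
  MSE N1 N2 A B <= INR (2*l-1) ^ 2 * MSE ((2*l-1)*N1) ((2*l-1)*N2) C D.
Proof.
  intros Hl H1 H2 H. unfold MSE.
  set (G := fun k1 k2 => (C k1 k2 - D k1 k2) ^ 2).
  assert (HG : forall a b, 0 <= G a b) by (intros; unfold G; apply pow2_ge_0).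
  rewrite (sum_1n_ext _ _ (fun i => sum_1n N2 (fun j => G (phi l i) (phi l j)))).
  2:{ intros i Hi. apply sum_1n_ext. intros j Hj. rewrite H by auto. reflexivity. }
  assert (Hs : sum_1n N1 (fun i => sum_1n N2 (fun j => G (phi l i) (phi l j)))
       <= sum_1n ((2*l-1)*N1) (fun k1 => sum_1n ((2*l-1)*N2) (fun k2 => G k1 k2))).
  { apply Rle_trans with (sum_1n N1 (fun i => sum_1n ((2*l-1)*N2) (fun k2 => G (phi l i) k2))).
    - apply sum_le. intros i Hi.
      apply (subsum N2 _ (fun k2 => G (phi l i) k2) (phi l)); auto.
      + intros; apply phi_strict; auto.
      + pose proof (phi_range l N2 N2 Hl). lia.
    - apply (subsum N1 _ (fun k1 => sum_1n ((2*l-1)*N2) (fun k2 => G k1 k2)) (phi l)); auto.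
      + intros; apply sum_nonneg; auto.
      + intros; apply phi_strict; auto.
      + pose proof (phi_range l N1 N1 Hl). lia. }
  rewrite !mult_INR.
  assert (0 < INR (2*l-1)) by (apply lt_0_INR; lia).
  assert (0 < INR N1) by (apply lt_0_INR; lia).
  assert (0 < INR N2) by (apply lt_0_INR; lia).
  apply Rle_trans with (/ (INR N1 * INR N2) * sum_1n ((2*l-1)*N1) (fun k1 => sum_1n ((2*l-1)*N2) (fun k2 => G k1 k2))).
  - apply Rmult_le_compat_l; auto.
    left; apply Rinv_0_lt_compat; nra.
  - right. unfold G. field. lra.
Qed.

Theorem proposition1
  (l n1 n2 N1 N2 m1 m2 : nat)
  (hl : (1 <= l)%nat)
  (hN1 : (1 <= N1)%nat) (hN2 : (1 <= N2)%nat)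
  (hn1 : n1 = ((2 * l - 1) * N1)%nat) (hn2 : n2 = ((2 * l - 1) * N2)%nat)
  (hm1 : (1 <= m1 < n1)%nat) (hm2 : (1 <= m2 < n2)%nat)
  (f ft : nat -> R -> R -> R)
  (a1 a2 a3 a4 maxf c1 c2 : R)
  (hmaxf : 0 < maxf) (hc1 : 0 < c1) (hc2 : 0 < c2) :
  let s := INR (2 * l - 1) in
  let I := sample_image n1 n2 f in
  let It := sample_image n1 n2 ft in
  let Rimg := sample_image N1 N2 f in
  let Rt := VP_image n1 n2 m1 m2 N1 N2 ft in
  MSE_color N1 N2 Rimg Rt <= s ^ 2 * MSE_color n1 n2 I It
  /\ MSE N1 N2 (luma a1 a2 a3 a4 Rimg) (luma a1 a2 a3 a4 Rt)
       <= s ^ 2 * MSE n1 n2 (luma a1 a2 a3 a4 I) (luma a1 a2 a3 a4 It)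
  /\ ((forall (lam i j : nat), (1 <= lam <= 3)%nat -> (1 <= i <= n1)%nat ->
         (1 <= j <= n2)%nat -> I lam i j = It lam i j) ->
      PSNR a1 a2 a3 a4 maxf N1 N2 Rimg Rt = p_infty
      /\ SSIM a1 a2 a3 a4 c1 c2 N1 N2 Rimg Rt = 1).
Proof.
  intros s I It Rimg Rt.
  assert (HR : forall lam i j, (1 <= i <= N1)%nat -> (1 <= j <= N2)%nat ->
            Rimg lam i j = I lam (phi l i) (phi l j)).
  { intros lam i j Hi Hj. unfold Rimg, I, sample_image.
    rewrite (node_phi l N1 i), (node_phi l N2 j) by lia. subst n1 n2. reflexivity. }
  assert (HT : forall lam i j, (1 <= i <= N1)%nat -> (1 <= j <= N2)%nat ->
            Rt lam i j = It lam (phi l i) (phi l j)).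
  { intros lam i j Hi Hj. unfold Rt, It, VP_image, sample_image.
    rewrite (node_phi l N1 i), (node_phi l N2 j) by lia. subst n1 n2.
    pose proof (phi_range l N1 i hl Hi). pose proof (phi_range l N2 j hl Hj).
    apply VP2_node; lia. }
  assert (Hsub : forall (A B C D : gimage),
    (forall i j, (1 <= i <= N1)%nat -> (1 <= j <= N2)%nat ->
     A i j - B i j = C (phi l i) (phi l j) - D (phi l i) (phi l j)) ->
    MSE N1 N2 A B <= s ^ 2 * MSE n1 n2 C D).
  { intros. subst n1 n2. apply mse_sub; auto. }
  split; [|split].
  - unfold MSE_color. cbn [sum_1n].
    assert (E1 := Hsub (Rimg 1%nat) (Rt 1%nat) (I 1%nat) (It 1%nat)
       ltac:(intros; rewrite HR, HT by auto; reflexivity)).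
    assert (E2 := Hsub (Rimg 2%nat) (Rt 2%nat) (I 2%nat) (It 2%nat)
       ltac:(intros; rewrite HR, HT by auto; reflexivity)).
    assert (E3 := Hsub (Rimg 3%nat) (Rt 3%nat) (I 3%nat) (It 3%nat)
       ltac:(intros; rewrite HR, HT by auto; reflexivity)).
    lra.
  - apply Hsub. intros i j Hi Hj. unfold luma. rewrite !HR, !HT by auto. ring.
  - intros Heq.
    assert (HE : forall i j, (1 <= i <= N1)%nat -> (1 <= j <= N2)%nat ->
              luma a1 a2 a3 a4 Rimg i j = luma a1 a2 a3 a4 Rt i j).
    { intros i j Hi Hj. unfold luma. rewrite !HR, !HT by auto.
      pose proof (phi_range l N1 i hl Hi). pose proof (phi_range l N2 j hl Hj).
      rewrite !Heq by lia. reflexivity. }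
    set (AY := luma a1 a2 a3 a4 Rimg) in *.
    set (BY := luma a1 a2 a3 a4 Rt) in *.
    split.
    + unfold PSNR. fold AY BY.
      assert (M0 : MSE N1 N2 AY BY = 0).
      { unfold MSE.
        rewrite (sum_1n_ext _ _ (fun _ => 0)).
        - rewrite sum_1n_const. ring.
        - intros i Hi. rewrite (sum_1n_ext _ _ (fun _ => 0)).
          + rewrite sum_1n_const. ring.
          + intros j Hj. rewrite HE by auto. ring. }
      cbv zeta. destruct (Req_EM_T (MSE N1 N2 AY BY) 0); [reflexivity|contradiction].
    + unfold SSIM. fold AY BY.
      assert (Mu : gmean N1 N2 BY = gmean N1 N2 AY).
      { unfold gmean. f_equal. apply sum_1n_ext. intros. apply sum_1n_ext. intros.
        rewrite HE; auto. }
      assert (Cv : gcov N1 N2 AY BY = gvar N1 N2 AY).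
      { unfold gvar, gcov. rewrite Mu. f_equal. apply sum_1n_ext. intros. apply sum_1n_ext. intros.
        rewrite HE; auto. }
      assert (Vv : gvar N1 N2 BY = gvar N1 N2 AY).
      { unfold gvar, gcov. rewrite Mu. f_equal. apply sum_1n_ext. intros. apply sum_1n_ext. intros.
        rewrite HE; auto. }
      assert (V0 : 0 <= gvar N1 N2 AY).
      { unfold gvar, gcov. apply Rmult_le_pos.
        - left. apply Rinv_0_lt_compat. apply Rmult_lt_0_compat; apply lt_0_INR; lia.
        - apply sum_nonneg. intros. apply sum_nonneg. intros. apply Rle_0_sqr. }
      cbv zeta. rewrite Mu, Cv, Vv.
      assert (0 <= gmean N1 N2 AY ^ 2) by apply pow2_ge_0.
      field. split; nra.
Qed.
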